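(* Let $X=\{x_j:j\in J\}\subset\mathbb{R}^2$ be finite with quadratic min-power centre $s^*$ and centroid $M$, and let $r\in J$ be such that $x_r$ is a point of $X$ farthest from $M$. If $s^*\in\mathrm{int}(V(x_j))$ for some $j\in J$, then $s^*=M_r$.
   Context: $n=|J|$; $s^*$ is the unique minimiser of $P(s)=\sum_{i\in J}\|s-x_i\|^2+\max_{i\in J}\|s-x_i\|^2$; $M=\frac1n\sum_ix_i$; $M_j=\frac{1}{n+1}\big(x_j+\sum_{i\in J}x_i\big)$; $V(x_j)=\{s:\|s-x_j\|=\max_{i\in J}\|s-x_i\|\}$ and $\mathrm{int}$ denotes its interior. *)

(* Defs.v *)
From HB Require Import structures.
From mathcomp Require Import all_boot all_order all_algebra.
Set Implicit Arguments. Unset Strict Implicit. Unset Printing Implicit Defensive.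
Import Order.TTheory GRing.Theory Num.Theory.
Local Open Scope ring_scope.

Section Defs.
Variable R : rcfType.
Definition pt := (R * R)%type.

Definition dist2 (s x : pt) : R := (s.1 - x.1) ^+ 2 + (s.2 - x.2) ^+ 2.
Definition dist (s x : pt) : R := Num.sqrt (dist2 s x).

Variable J : finType.
Variable x : J -> pt.

(* P(s) = sum_i ||s - x_i||^2 + max_i ||s - x_i||^2  (distances are >= 0, so 0 is a
   neutral start for the max) *)
Definition Pfun (s : pt) : R :=
  \sum_(i : J) dist2 s (x i) + \big[Num.max/0]_(i : J) dist2 s (x i).

Definition min_power_centre (s : pt) : Prop := forall t, Pfun s <= Pfun t.

Definition centroid : pt :=
  ((\sum_(i : J) (x i).1) / #|J|%:R, (\sum_(i : J) (x i).2) / #|J|%:R).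

Definition Mj (j : J) : pt :=
  (((x j).1 + \sum_(i : J) (x i).1) / (#|J|.+1)%:R,
   ((x j).2 + \sum_(i : J) (x i).2) / (#|J|.+1)%:R).

Definition Vcell (j : J) (s : pt) : Prop :=
  dist s (x j) = \big[Num.max/0]_(i : J) dist s (x i).

Definition in_interior (A : pt -> Prop) (s : pt) : Prop :=
  exists2 e : R, 0 < e & forall t, dist t s < e -> A t.
End Defs.

(* Main.v *)
Require Import Defs.
From HB Require Import structures.
From mathcomp Require Import all_boot all_order all_algebra.
From mathcomp Require Import ring lra.
Import Order.TTheory GRing.Theory Num.Theory.
Local Open Scope ring_scope.

Section H.
Variable R : rcfType.
Variable J : finType.

Lemma bigmax_ge (f : J -> R) i : f i <= \big[Num.max/0]_k f k.
Proof. by rewrite (bigD1 i) //= le_max lexx. Qed.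

Lemma bigmax_le (f : J -> R) c : 0 <= c -> (forall i, f i <= c) ->
  \big[Num.max/0]_k f k <= c.
Proof.
move=> c0 h; elim/big_ind: _ => //.
by move=> a b ha hb; rewrite ge_max ha hb.
Qed.

Lemma sum_sq (a : R) (g : J -> R) :
  \sum_i (a - g i) ^+ 2 =
  #|J|%:R * a ^+ 2 - 2 * a * \sum_i g i + \sum_i g i ^+ 2.
Proof.
transitivity (\sum_i (a ^+ 2 - 2 * a * g i + g i ^+ 2)).
  by apply: eq_bigr => i _; ring.
rewrite big_split /= sumrB sumr_const -mulr_sumr -mulr_natl.
have -> : #|J| = #|xpredT : pred J| by apply: eq_card.
ring.
Qed.
End H.
Arguments bigmax_ge {R J}. Arguments bigmax_le {R J}. Arguments sum_sq {R J}.

Lemma alg2 (R : rcfType) (n a1 a2 b1 b2 : R) : 0 < n ->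
  (a1 - (n+1) * b1) ^+ 2 + (a2 - (n+1) * b2) ^+ 2 <=
  (a1 - (n+1) * a1) ^+ 2 + (a2 - (n+1) * a2) ^+ 2 ->
  a1 ^+ 2 + a2 ^+ 2 <= b1 ^+ 2 + b2 ^+ 2 ->
  a1 = b1 /\ a2 = b2.
Proof.
move=> n0 h1 h2.
have h3 : (n+1) * ((a1-b1)^+2 + (a2-b2)^+2) <=
   (n+1) * n * ((a1 ^+ 2 + a2 ^+ 2) - (b1 ^+ 2 + b2 ^+ 2)).
  have e : (n+1) * ((a1-b1)^+2 + (a2-b2)^+2) -
   (n+1) * n * ((a1 ^+ 2 + a2 ^+ 2) - (b1 ^+ 2 + b2 ^+ 2)) =
   ((a1 - (n+1) * b1) ^+ 2 + (a2 - (n+1) * b2) ^+ 2) -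
   ((a1 - (n+1) * a1) ^+ 2 + (a2 - (n+1) * a2) ^+ 2) by ring.
  by rewrite -subr_le0 e subr_le0.
have h4 : (n+1) * n * ((a1 ^+ 2 + a2 ^+ 2) - (b1 ^+ 2 + b2 ^+ 2)) <= 0.
  apply: mulr_ge0_le0; first by apply: mulr_ge0; lra.
  by rewrite subr_le0.
have h5 : (a1-b1)^+2 + (a2-b2)^+2 <= 0.
  have : (n+1) * ((a1-b1)^+2 + (a2-b2)^+2) <= 0 by apply: le_trans h4.
  by rewrite pmulr_rle0 //; lra.
have q1 := sqr_ge0 (a1 - b1); have q2 := sqr_ge0 (a2 - b2).
have z1 : (a1 - b1) ^+ 2 = 0 by lra.
have z2 : (a2 - b2) ^+ 2 = 0 by lra.
move/eqP: z1; rewrite sqrf_eq0 subr_eq0 => /eqP ->.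
by move/eqP: z2; rewrite sqrf_eq0 subr_eq0 => /eqP ->.
Qed.

Theorem corollary1 (R : rcfType) (J : finType) (x : J -> pt R) (sstar : pt R) (r : J) :
  min_power_centre x sstar ->
  (forall i : J, dist (centroid x) (x i) <= dist (centroid x) (x r)) ->
  (exists j : J, in_interior (Vcell x j) sstar) ->
  sstar = Mj x r.
Proof.
move=> hmin hfar [j [e e0 hin]].
have d2ge0 : forall s t : pt R, 0 <= dist2 s t.
  by move=> s t; rewrite /dist2 addr_ge0 // sqr_ge0.
have cellle : forall t, dist t sstar < e -> forall i, dist2 t (x i) <= dist2 t (x j).
  move=> t /hin V i.
  have : dist t (x i) <= dist t (x j).
    by rewrite /Vcell in V; rewrite V; apply: (bigmax_ge (fun k => dist t (x k))).
  by rewrite /dist ler_sqrt.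
set Q := fun t => \sum_i dist2 t (x i) + dist2 t (x j).
have cellP : forall t, dist t sstar < e -> Pfun x t = Q t.
  move=> t ht; rewrite /Pfun /Q; congr (_ + _); apply/le_anti/andP; split.
    by apply: bigmax_le => //; apply: cellle.
  exact: (bigmax_ge (fun k => dist2 t (x k))).
have ss : dist sstar sstar < e.
  by rewrite /dist /dist2 !subrr expr0n /= addr0 sqrtr0.
have cardpos : (0 < #|J|)%N by apply/card_gt0P; exists r.
set n : R := #|J|%:R.
have n0 : 0 < n by rewrite ltr0n.
have NE : (#|J|.+1)%:R = n + 1 :> R by rewrite -natr1.
set S1 := \sum_i (x i).1.
set S2 := \sum_i (x i).2.
set T1 := \sum_i (x i).1 ^+ 2.
set T2 := \sum_i (x i).2 ^+ 2.
have cE : centroid x = (S1 / n, S2 / n) by [].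
have MjE : forall k, Mj x k = (((x k).1 + S1) / (n + 1), ((x k).2 + S2) / (n + 1)).
  by move=> k; rewrite /Mj NE.
have nE : #|J|%:R = n :> R by [].
clearbody n.
set m := Mj x j.
have mE : m = (((x j).1 + S1) / (n + 1), ((x j).2 + S2) / (n + 1)) by rewrite /m MjE.
clearbody m.
have n1 : n + 1 != 0 by rewrite gt_eqF //; lra.
have hm1 : S1 + (x j).1 = (n + 1) * m.1.
  by rewrite mE mulrC divfK // addrC.
have hm2 : S2 + (x j).2 = (n + 1) * m.2.
  by rewrite mE mulrC divfK // addrC.
have Qexp : forall t : pt R, Q t = (n + 1) * ((t.1 - m.1) ^+ 2 + (t.2 - m.2) ^+ 2)
    - (n+1) * (m.1 ^+ 2 + m.2 ^+ 2) + (T1 + T2 + (x j).1 ^+ 2 + (x j).2 ^+ 2).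
  move=> t; rewrite /Q /dist2 big_split /= !sum_sq -/n -/S1 -/S2 -/T1 -/T2.
  have -> : (t.1 - m.1) ^+ 2 = t.1 ^+ 2 - 2 * t.1 * m.1 + m.1 ^+ 2 by ring.
  have -> : (t.2 - m.2) ^+ 2 = t.2 ^+ 2 - 2 * t.2 * m.2 + m.2 ^+ 2 by ring.
  have e1 : 2 * t.1 * S1 = 2 * t.1 * ((n+1) * m.1) - 2 * t.1 * (x j).1.
    by rewrite -hm1; ring.
  have e2 : 2 * t.2 * S2 = 2 * t.2 * ((n+1) * m.2) - 2 * t.2 * (x j).2.
    by rewrite -hm2; ring.
  rewrite e1 e2 nE; ring.
set d := (sstar.1 - m.1) ^+ 2 + (sstar.2 - m.2) ^+ 2.
have dge0 : 0 <= d by rewrite /d addr_ge0 // sqr_ge0.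
have d0 : d = 0.
  apply/eqP; apply: contraT; move=> dn0.
  have dpos : 0 < d by rewrite lt_def dn0 dge0.
  have e2pos : 0 < e ^+ 2 by rewrite exprn_gt0.
  set h := e ^+ 2 / (e ^+ 2 + d).
  have hpos : 0 < h by rewrite /h divr_gt0 // addr_gt0.
  have hE : h * (e ^+ 2 + d) = e ^+ 2 by rewrite /h divfK // gt_eqF // addr_gt0.
  have hlt1 : h < 1.
    have pd : 0 < e ^+ 2 + d by rewrite addr_gt0.
    by rewrite /h ltr_pdivrMr // mul1r; lra.
  rewrite mulrDr in hE.
  have he2 : 0 < h * e ^+ 2 by rewrite mulr_gt0.
  set t : pt R := (sstar.1 + h * (m.1 - sstar.1), sstar.2 + h * (m.2 - sstar.2)).
  have dt : dist2 t sstar = h ^+ 2 * d by rewrite /dist2 /t /d /=; ring.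
  have tin : dist t sstar < e.
    rewrite /dist -(ger0_norm (ltW e0)) -sqrtr_sqr ltr_sqrt // dt.
    have : h ^+ 2 * d <= h * d by rewrite expr2 ler_wpM2r // ler_piMr //; lra.
    lra.
  have := hmin t; rewrite (cellP _ ss) (cellP _ tin) !Qexp.
  have -> : (t.1 - m.1) ^+ 2 + (t.2 - m.2) ^+ 2 = (1 - h) ^+ 2 * d
    by rewrite /t /d /=; ring.
  rewrite -/d => H.
  have H2 : (n + 1) * d <= (n + 1) * ((1 - h) ^+ 2 * d) by lra.
  have H3 : d <= (1 - h) ^+ 2 * d by move: H2; rewrite ler_pM2l //; lra.
  have H4 : (1 - h) ^+ 2 < 1.
    have h5 : (1 - h) ^+ 2 <= 1 - h by rewrite expr2 ler_piMr //; lra.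
    lra.
  have : (1 - h) ^+ 2 * d < d by rewrite gtr_pMl.
  lra.
have q1 := sqr_ge0 (sstar.1 - m.1); have q2 := sqr_ge0 (sstar.2 - m.2).
have z1 : (sstar.1 - m.1) ^+ 2 = 0 by rewrite /d in d0; lra.
have z2 : (sstar.2 - m.2) ^+ 2 = 0 by rewrite /d in d0; lra.
move/eqP: z1; rewrite sqrf_eq0 subr_eq0 => /eqP s1.
move/eqP: z2; rewrite sqrf_eq0 subr_eq0 => /eqP s2.
have sm : sstar = m by rewrite [sstar]surjective_pairing s1 s2 -surjective_pairing.
have hV := cellle _ ss r.
rewrite sm in hV.
have hF : dist2 (centroid x) (x j) <= dist2 (centroid x) (x r).
  by have := hfar j; rewrite /dist ler_sqrt.
set c1 := S1 / n. set c2 := S2 / n.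
have hc1 : S1 = n * c1 by rewrite /c1 mulrC divfK // gt_eqF.
have hc2 : S2 = n * c2 by rewrite /c2 mulrC divfK // gt_eqF.
have [a1 a2] : (x j).1 - c1 = (x r).1 - c1 /\ (x j).2 - c2 = (x r).2 - c2.
  apply: (@alg2 R n) => //.
    have e1 : forall y : R, (x j).1 - c1 - (n+1) * (y - c1) = (n+1) * (m.1 - y).
      by move=> y; rewrite [RHS]mulrBr -hm1 hc1; ring.
    have e2 : forall y : R, (x j).2 - c2 - (n+1) * (y - c2) = (n+1) * (m.2 - y).
      by move=> y; rewrite [RHS]mulrBr -hm2 hc2; ring.
    rewrite !e1 !e2 !exprMn -!mulrDr.
    apply: ler_wpM2l; first by apply: exprn_ge0; lra.
    exact: hV.
  move: hF; rewrite /dist2 cE -/c1 -/c2.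
  have sw : forall u v : R, (u - v) ^+ 2 = (v - u) ^+ 2 by move=> u v; ring.
  move=> H; rewrite (sw (x j).1) (sw (x j).2) (sw (x r).1) (sw (x r).2); exact: H.
have ejr : x j = x r.
  rewrite [x j]surjective_pairing [x r]surjective_pairing.
  by congr (_, _); lra.
by rewrite sm mE MjE ejr.
Qed.
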